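(* In the setting below, consider the limiting optimal energy efficiency as a function of the spectral efficiency $\mathrm{SE}\in(0,R_{\mathrm{max}}/(1+\alpha_{\mathrm{rol}})]$: $$\mathrm{EE}_\infty(\mathrm{SE})=\begin{cases}\dfrac{B\,\mathrm{SE}}{P_{\mathrm{sleep}}+\mathrm{SE}\frac{1+\alpha_{\mathrm{rol}}}{\tilde R}(P_0-P_{\mathrm{sleep}}+\gamma\tilde P^{\alpha})}, & \mathrm{SE}\le \tilde R/(1+\alpha_{\mathrm{rol}}),\\[2mm] \dfrac{B\,\mathrm{SE}}{P_0+\gamma\sigma^{2\alpha}(2^{\mathrm{SE}(1+\alpha_{\mathrm{rol}})}-1)^{\alpha}}, & \mathrm{SE}> \tilde R/(1+\alpha_{\mathrm{rol}}).\end{cases}$$ Then: (i) if $R_{\mathrm{a}}\ge R_{\mathrm{max}}$, $\mathrm{EE}_\infty$ is maximized at $\bar{\mathrm{SE}}=\mathrm{SE}_{\mathrm{max}}=R_{\mathrm{max}}/(1+\alpha_{\mathrm{rol}})$, with maximal value $\mathrm{EE}_{\mathrm{max}}=\frac{B\,\mathrm{SE}_{\mathrm{max}}}{P_0+\gamma P_{\mathrm{max}}^{\alpha}}$; (ii) if $R_{\mathrm{a}}<R_{\mathrm{max}}$, $\mathrm{EE}_\infty$ is maximized at $\bar{\mathrm{SE}}=\bar R/(1+\alpha_{\mathrm{rol}})$, where $\bar R$ is a minimizer over $x\in[R_{\mathrm{a}},R_{\mathrm{max}}]$ of the convex function $\frac{P_0+\gamma\sigma^{2\alpha}(2^{x}-1)^{\alpha}}{x}$,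 with maximal value $\mathrm{EE}_{\mathrm{max}}=\frac{B\,\bar{\mathrm{SE}}}{P_0+\gamma\sigma^{2\alpha}(2^{\bar R}-1)^{\alpha}}$.
   Context: Parameters: $T>0$, $\alpha_{\mathrm{rol}}\in[0,1]$, $B=(1+\alpha_{\mathrm{rol}})/T$, $\sigma^2>0$, $P_{\mathrm{max}}\in(0,\infty)$, $\alpha\in(0,1]$, $\gamma>0$, $P_0\ge0$, constant sleep power $P_{\mathrm{sleep}}\in[0,P_0]$. Definitions: $R_{\mathrm{max}}=\log_2(1+P_{\mathrm{max}}/\sigma^2)$; $R_{\mathrm{a}}$ is a minimizer over $x>0$ of $\frac{P_0-P_{\mathrm{sleep}}+\gamma\sigma^{2\alpha}(2^x-1)^{\alpha}}{x}$ (with $R_{\mathrm{a}}=0$ if $P_0=P_{\mathrm{sleep}},\alpha=1$); $P_{\mathrm{a}}=(2^{R_{\mathrm{a}}}-1)\sigma^2$; $\tilde R=\min(R_{\mathrm{a}},R_{\mathrm{max}})$; $\tilde P=\min(P_{\mathrm{a}},P_{\mathrm{max}})$. (The function $\mathrm{EE}_\infty$ is the large-$N$ limit of the optimal energy efficiency $R/(T P^\star_{\mathrm{cons}})$ for the single-user frame-based power minimization problem with rate $R=\mathrm{SE}(1+\alpha_{\mathrm{rol}})$.) *)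

(* Defs.v *)
(* R : realType, real powers via powR (a `^ x),
   with 0 `^ x = 0 for x <> 0, natural log ln. *)
From HB Require Import structures.
From mathcomp Require Import all_boot all_order all_algebra.
From mathcomp Require Import all_classical all_reals all_analysis.
Set Implicit Arguments. Unset Strict Implicit. Unset Printing Implicit Defensive.
Import Order.TTheory GRing.Theory Num.Theory.
Local Open Scope ring_scope.

Section EE.
Variable R : realType.

Definition Bw (T arol : R) : R := (1 + arol) / T.

Definition Rmax (sigma2 Pmax : R) : R := ln (1 + Pmax / sigma2) / ln 2.

Definition fa (P0 Psleep gamma alpha sigma2 x : R) : R :=
  (P0 - Psleep + gamma * sigma2 `^ alpha * (2 `^ x - 1) `^ alpha) / x.

Definition gbar (P0 gamma alpha sigma2 x : R) : R :=
  (P0 + gamma * sigma2 `^ alpha * (2 `^ x - 1) `^ alpha) / x.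

Definition Ra_spec (P0 Psleep gamma alpha sigma2 Ra : R) : Prop :=
  if (P0 == Psleep) && (alpha == 1) then Ra = 0
  else 0 < Ra /\ forall x, 0 < x ->
         fa P0 Psleep gamma alpha sigma2 Ra <= fa P0 Psleep gamma alpha sigma2 x.

Definition Pa (sigma2 Ra : R) : R := (2 `^ Ra - 1) * sigma2.
Definition Rtilde (sigma2 Pmax Ra : R) : R := Num.min Ra (Rmax sigma2 Pmax).
Definition Ptilde (sigma2 Pmax Ra : R) : R := Num.min (Pa sigma2 Ra) Pmax.

Definition EEinf (T arol sigma2 Pmax alpha gamma P0 Psleep Ra SE : R) : R :=
  let Rt := Rtilde sigma2 Pmax Ra in
  let Pt := Ptilde sigma2 Pmax Ra in
  if SE <= Rt / (1 + arol) then
    Bw T arol * SE /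
      (Psleep + SE * (1 + arol) / Rt * (P0 - Psleep + gamma * Pt `^ alpha))
  else
    Bw T arol * SE /
      (P0 + gamma * sigma2 `^ alpha * (2 `^ (SE * (1 + arol)) - 1) `^ alpha).

End EE.

(* Main.v *)
Require Import Defs.
From HB Require Import structures.
From mathcomp Require Import all_boot all_order all_algebra.
From mathcomp Require Import all_classical all_reals all_analysis.
From mathcomp Require Import ring lra.
Import Order.TTheory GRing.Theory Num.Theory.
Local Open Scope ring_scope.

Section H.
Context {R : realType}.

Lemma div_le (a b a' b' : R) : 0 < b -> 0 < b' -> a * b' <= a' * b -> a / b <= a' / b'.
Proof.
move=> hb hb' h.
rewrite ler_pdivlMr // mulrAC ler_pdivrMr //.
Qed.

Lemma mono_lo (B s S a K : R) : 0 < B -> 0 < s -> s <= S -> 0 <= a -> 0 < K ->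
  B * s / (a + s * K) <= B * S / (a + S * K).
Proof.
move=> hB hs hsS ha hK; apply: div_le.
- by apply: ltr_wpDl => //; apply: mulr_gt0.
- by apply: ltr_wpDl => //; apply: mulr_gt0 => //; lra.
have : 0 <= B * a * (S - s) by apply: mulr_ge0; [apply: mulr_ge0; lra | lra].
nra.
Qed.

Lemma key (B c x y hx hy : R) : 0 < B -> 0 < c -> 0 < x -> 0 < y -> 0 < hx -> 0 < hy ->
  hy / y <= hx / x -> B * (x / c) / hx <= B * (y / c) / hy.
Proof.
move=> hB hc hx0 hy0 hhx hhy h.
apply: div_le => //.
have h2 : hy * x <= hx * y.
  have := ler_wpM2r (ltW (mulr_gt0 hx0 hy0)) h.
  have e1 : hy / y * (x * y) = hy * x by field; lra.
  have e2 : hx / x * (x * y) = hx * y by field; lra.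
  by rewrite e1 e2.
have e3 : B * (x / c) * hy = (B / c) * (hy * x) by ring.
have e4 : B * (y / c) * hx = (B / c) * (hx * y) by ring.
rewrite e3 e4; apply: ler_wpM2l => //.
by apply: ltW; apply: divr_gt0.
Qed.

Lemma pow2E (x : R) : 2 `^ x = expR (x * ln 2).
Proof. by rewrite /powR pnatr_eq0. Qed.

Lemma pow2_gt1 (x : R) : 0 < x -> 1 < 2 `^ x.
Proof. move=> hx; rewrite pow2E expR_gt1; apply: mulr_gt0 => //; apply: ln_gt0; lra. Qed.

Lemma pow2_le (x y : R) : x <= y -> 2 `^ x <= 2 `^ y.
Proof. by apply: ler_powR; lra. Qed.

Lemma pow2_Rmax (s P : R) : 0 < s -> 0 < P -> 2 `^ Rmax s P = 1 + P / s.
Proof.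
move=> hs hP; rewrite pow2E /Rmax.
have h2 : 0 < ln (2:R) by apply: ln_gt0; lra.
have -> : ln (1 + P / s) / ln 2 * ln 2 = ln (1 + P / s) by field; lra.
rewrite lnK // posrE; have := divr_gt0 hP hs; lra.
Qed.

End H.

Lemma EE_lo (R : realType) (T arol sigma2 Pmax alpha gamma P0 Psleep Ra SE : R) :
  SE <= Rtilde sigma2 Pmax Ra / (1 + arol) ->
  EEinf T arol sigma2 Pmax alpha gamma P0 Psleep Ra SE =
  Bw T arol * SE / (Psleep + SE * (1 + arol) / Rtilde sigma2 Pmax Ra *
     (P0 - Psleep + gamma * Ptilde sigma2 Pmax Ra `^ alpha)).
Proof. by move=> h; rewrite /EEinf /= h. Qed.

Lemma EE_hi (R : realType) (T arol sigma2 Pmax alpha gamma P0 Psleep Ra SE : R) :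
  ~~ (SE <= Rtilde sigma2 Pmax Ra / (1 + arol)) ->
  EEinf T arol sigma2 Pmax alpha gamma P0 Psleep Ra SE =
  Bw T arol * SE /
      (P0 + gamma * sigma2 `^ alpha * (2 `^ (SE * (1 + arol)) - 1) `^ alpha).
Proof. by move=> h; rewrite /EEinf /= (negbTE h). Qed.

Theorem corollary2 (R : realType)
    (T arol sigma2 Pmax alpha gamma P0 Psleep Ra : R)
    (hT : 0 < T) (harol0 : 0 <= arol) (harol1 : arol <= 1)
    (hsigma2 : 0 < sigma2) (hPmax : 0 < Pmax)
    (halpha0 : 0 < alpha) (halpha1 : alpha <= 1)
    (hgamma : 0 < gamma) (hP0 : 0 <= P0)
    (hPs0 : 0 <= Psleep) (hPs1 : Psleep <= P0)
    (hRa : Ra_spec P0 Psleep gamma alpha sigma2 Ra) :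
  let EE := EEinf T arol sigma2 Pmax alpha gamma P0 Psleep Ra in
  let SEmax := Rmax sigma2 Pmax / (1 + arol) in
  (Rmax sigma2 Pmax <= Ra ->
     (forall SE, 0 < SE -> SE <= SEmax -> EE SE <= EE SEmax) /\
     EE SEmax = Bw T arol * SEmax / (P0 + gamma * Pmax `^ alpha)) /\
  (Ra < Rmax sigma2 Pmax ->
     forall Rbar, 0 < Rbar -> Ra <= Rbar -> Rbar <= Rmax sigma2 Pmax ->
       (forall x, 0 < x -> Ra <= x -> x <= Rmax sigma2 Pmax ->
          gbar P0 gamma alpha sigma2 Rbar <= gbar P0 gamma alpha sigma2 x) ->
       let SEbar := Rbar / (1 + arol) in
       (0 < SEbar /\ SEbar <= SEmax) /\
       (forall SE, 0 < SE -> SE <= SEmax -> EE SE <= EE SEbar) /\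
       EE SEbar = Bw T arol * SEbar /
         (P0 + gamma * sigma2 `^ alpha * (2 `^ Rbar - 1) `^ alpha)).
Proof.
move=> EE SEmax.
have hc : 0 < 1 + arol by lra.
have hB : 0 < Bw T arol by rewrite /Bw; apply: divr_gt0.
have hRm : 0 < Rmax sigma2 Pmax.
  rewrite /Rmax; apply: divr_gt0; apply: ln_gt0; last lra.
  have := divr_gt0 hPmax hsigma2; lra.
have h2Rm := pow2_Rmax sigma2 Pmax hsigma2 hPmax.
have hRa0 : Ra = 0 \/ 0 < Ra.
  by move: hRa; rewrite /Ra_spec; case: ifP => _; [left | case=> h _; right].
have hRage : 0 <= Ra by case: hRa0 => [->|/ltW].
have hsa : 0 < sigma2 `^ alpha by apply: powR_gt0.
have hpos : forall x, 0 < x ->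
    0 < P0 + gamma * sigma2 `^ alpha * (2 `^ x - 1) `^ alpha.
  move=> x hx; apply: ltr_wpDl => //; apply: mulr_gt0; first exact: mulr_gt0.
  by apply: powR_gt0; have := pow2_gt1 x hx; lra.
have hPa : gamma * Pa sigma2 Ra `^ alpha = gamma * sigma2 `^ alpha * (2 `^ Ra - 1) `^ alpha.
  rewrite /Pa powRM; first by rewrite -mulrA; congr (_ * _); rewrite mulrC.
  - have := pow2_le 0 Ra hRage; rewrite powRr0.
    lra.
  - lra.
split.
- move=> hRmRa.
  have eRt : Rtilde sigma2 Pmax Ra = Rmax sigma2 Pmax by rewrite /Rtilde min_r.
  have ePt : Ptilde sigma2 Pmax Ra = Pmax.
    rewrite /Ptilde min_r // /Pa.
    have := pow2_le _ _ hRmRa; rewrite h2Rm => h.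
    have e : Pmax = (1 + Pmax / sigma2 - 1) * sigma2 by field; lra.
    rewrite [X in X <= _]e; apply: ler_wpM2r; lra.
  have hK : 0 < P0 - Psleep + gamma * Pmax `^ alpha.
    have := powR_gt0 alpha hPmax; have := mulr_gt0 hgamma (powR_gt0 alpha hPmax); lra.
  have hEEmax : EE SEmax = Bw T arol * SEmax / (P0 + gamma * Pmax `^ alpha).
    rewrite /EE EE_lo eRt ?ePt ?lexx //.
    have -> : SEmax * (1 + arol) / Rmax sigma2 Pmax = 1.
      rewrite /SEmax; field; apply/andP; split; lra.
    by congr (_ / _); lra.
  split; last exact: hEEmax.
  move=> SE hSE hSEle.
  rewrite [X in _ <= X]hEEmax /EE EE_lo; last by rewrite eRt; exact: hSEle.
  rewrite eRt ePt.
  set K := (1 + arol) / Rmax sigma2 Pmax * (P0 - Psleep + gamma * Pmax `^ alpha).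
  have hK' : 0 < K by apply: mulr_gt0 => //; apply: divr_gt0.
  have e1 : SE * (1 + arol) / Rmax sigma2 Pmax * (P0 - Psleep + gamma * Pmax `^ alpha) = SE * K
    by rewrite /K !mulrA.
  have e2 : P0 + gamma * Pmax `^ alpha = Psleep + SEmax * K.
    rewrite /K /SEmax; field; apply/andP; split; lra.
  rewrite e1 e2; exact: (mono_lo _ _ _ _ _ hB hSE hSEle hPs0 hK').
- move=> hRaRm Rbar hRb0 hRaRb hRbRm hmin SEbar.
  have eRt : Rtilde sigma2 Pmax Ra = Ra by rewrite /Rtilde min_l // ltW.
  have ePt : Ptilde sigma2 Pmax Ra = Pa sigma2 Ra.
    rewrite /Ptilde min_l // /Pa.
    have := pow2_le _ _ (ltW hRaRm); rewrite h2Rm => h.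
    have e : Pmax = (1 + Pmax / sigma2 - 1) * sigma2 by field; lra.
    rewrite [X in _ <= X]e; apply: ler_wpM2r; lra.
  have hSEb0 : 0 < SEbar by apply: divr_gt0.
  have hSEbm : SEbar <= SEmax by apply: ler_wpM2r => //; rewrite invr_ge0 ltW.
  have hval : EE SEbar = Bw T arol * SEbar /
         (P0 + gamma * sigma2 `^ alpha * (2 `^ Rbar - 1) `^ alpha).
    rewrite /EE; case: (boolP (SEbar <= Rtilde sigma2 Pmax Ra / (1 + arol))) => h.
    + rewrite EE_lo; last exact: h.
      rewrite eRt ePt hPa.
      move: h; rewrite eRt => h.
      have eR : Rbar = Ra.
        apply/eqP; rewrite eq_le hRaRb andbT.
        by move: h; rewrite /SEbar ler_pM2r // invr_gt0.
      rewrite -eR.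
      have -> : SEbar * (1 + arol) / Rbar = 1 by rewrite /SEbar; field; apply/andP; split; lra.
      by congr (_ / _); lra.
    + rewrite EE_hi; last exact: h.
      have -> : SEbar * (1 + arol) = Rbar by rewrite /SEbar; field; lra.
      by [].
  split; first by split.
  split; last exact: hval.
  move=> SE hSE hSEle.
  rewrite hval.
  have hgb : forall x, 0 < x -> Ra <= x -> x <= Rmax sigma2 Pmax ->
    Bw T arol * (x / (1 + arol)) /
      (P0 + gamma * sigma2 `^ alpha * (2 `^ x - 1) `^ alpha)
    <= Bw T arol * SEbar / (P0 + gamma * sigma2 `^ alpha * (2 `^ Rbar - 1) `^ alpha).
    move=> x hx hx1 hx2.
    rewrite /SEbar; apply: (key _ _ _ _ _ _ hB hc hx hRb0 (hpos _ hx) (hpos _ hRb0)).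
    exact: hmin.
  rewrite /EE; case: (boolP (SE <= Rtilde sigma2 Pmax Ra / (1 + arol))) => h.
  + rewrite EE_lo; last exact: h.
    rewrite eRt ePt.
    move: h; rewrite eRt => h.
    have hRap : 0 < Ra.
      have := lt_le_trans hSE h; rewrite pmulr_lgt0 // invr_gt0 //.
    set K := (1 + arol) / Ra * (P0 - Psleep + gamma * Pa sigma2 Ra `^ alpha).
    have hK : 0 < K.
      apply: mulr_gt0; first by apply: divr_gt0.
      rewrite hPa.
      have h21 : 0 < 2 `^ Ra - 1 by have := pow2_gt1 Ra hRap; lra.
      have := mulr_gt0 (mulr_gt0 hgamma hsa) (powR_gt0 alpha h21); lra.
    have e1 : SE * (1 + arol) / Ra * (P0 - Psleep + gamma * Pa sigma2 Ra `^ alpha) = SE * K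
      by rewrite /K !mulrA.
    rewrite e1; apply: le_trans (hgb Ra hRap (lexx _) (ltW hRaRm)).
    have e2 : P0 + gamma * sigma2 `^ alpha * (2 `^ Ra - 1) `^ alpha = Psleep + Ra / (1 + arol) * K.
      rewrite /K -hPa; field; apply/andP; split; lra.
    rewrite e2; exact: (mono_lo _ _ _ _ _ hB hSE h hPs0 hK).
  + rewrite EE_hi; last exact: h.
    have hx : Ra <= SE * (1 + arol).
      move: h; rewrite eRt -ltNge ltr_pdivrMr // => h'; exact: ltW.
    have := hgb (SE * (1 + arol)) (mulr_gt0 hSE hc) hx.
    have -> : SE * (1 + arol) / (1 + arol) = SE by field; lra.
    apply.
    have := ler_wpM2r (ltW hc) hSEle.
    by have -> : SEmax * (1 + arol) = Rmax sigma2 Pmax by rewrite /SEmax; field; lra.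
Qed.
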